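(* Let $A(z)=\sum_{k=0}^{\infty}a_kz^k$ with $a_0\neq 0$ and $H(z)=\sum_{k=1}^{\infty}h_kz^k$ with $h_1\neq 0$ be analytic in a disk $|z|<R$ with $R>1$, with real coefficients. Let the Sheffer polynomials $p_k$ be defined by $A(t)e^{xH(t)}=\sum_{k=0}^{\infty}p_k(x)t^k$ for $|t|<R$, and assume $p_k(x)\ge 0$ for all $x\ge 0$ and all $k$, $A(1)\neq 0$ and $H'(1)=1$. Let $(b_n)$ be a positive increasing sequence with $b_n\to\infty$ and $b_n/n\to 0$, and define $$T_n^*(f;x)=\frac{e^{-\frac{n}{b_n}xH(1)}}{A(1)}\sum_{k=0}^{\infty}p_k\Big(\frac{n}{b_n}x\Big)f\Big(\frac{k}{n}b_n\Big).$$ Let $\rho(x)=1+x^2$. Then for every $f\in C_\rho^k(\mathbb{R}_0^+)$, $$\lim_{n\to\infty}\|T_n^*(f;\cdot)-f\|_\rho=0.$$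
   Context: $\mathbb{R}_0^+=[0,\infty)$. For a function $g$ on $\mathbb{R}_0^+$, $\|g\|_\rho=\sup_{x\ge 0}\frac{|g(x)|}{\rho(x)}$. $B_\rho(\mathbb{R}_0^+)$ is the set of functions $f$ on $\mathbb{R}_0^+$ with $|f(x)|\le M_f\rho(x)$ for all $x\ge0$ and some constant $M_f>0$; $C_\rho(\mathbb{R}_0^+)$ is the set of continuous functions in $B_\rho(\mathbb{R}_0^+)$; and $C_\rho^k(\mathbb{R}_0^+)$ is the set of $f\in C_\rho(\mathbb{R}_0^+)$ for which $\lim_{x\to\infty}\frac{f(x)}{\rho(x)}$ exists and is finite. *)

(* Defs.v *)
From Stdlib Require Import Reals Lra.
From Coquelicot Require Import Coquelicot.
Open Scope R_scope.

Definition rho (x : R) : R := 1 + x ^ 2.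

Definition rho_norm (g : R -> R) : Rbar :=
  Lub_Rbar (fun y => exists x, 0 <= x /\ y = Rabs (g x) / rho x).

Definition B_rho (f : R -> R) : Prop :=
  exists M, 0 < M /\ forall x, 0 <= x -> Rabs (f x) <= M * rho x.

Definition C_rho (f : R -> R) : Prop :=
  (forall x, 0 <= x ->
     filterlim f (within (fun y => 0 <= y) (locally x)) (locally (f x)))
  /\ B_rho f.

Definition C_rho_k (f : R -> R) : Prop :=
  C_rho f /\ exists l : R, is_lim (fun x => f x / rho x) p_infty l.

Definition T_star (a h : nat -> R) (p : nat -> R -> R) (b : nat -> R)
    (n : nat) (f : R -> R) (x : R) : R :=
  exp (- (INR n / b n) * x * PSeries h 1) / PSeries a 1
  * Series (fun k => p k (INR n / b n * x) * f (INR k / INR n * b n)).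

(* Main.v *)
Require Import Defs.
From Stdlib Require Import Reals Lra Psatz.
From Coquelicot Require Import Coquelicot.
Open Scope R_scope.

Lemma rad_ge (q : nat -> R) (r : R) : 0 <= r ->
  ex_series (fun k => q k * r ^ k) -> Rbar_le (Finite r) (CV_radius q).
Proof.
  intros Hr Hs. apply Rbar_not_lt_le. intro Hlt.
  apply (CV_disk_outside q r). rewrite Rabs_pos_eq; auto.
  now apply ex_series_lim_0.
Qed.

Lemma is_series_pser (q : nat -> R) (t : R) : Rbar_lt (Rabs t) (CV_radius q) ->
  is_series (fun k => q k * t ^ k) (PSeries q t).
Proof.
  intro H. generalize (PSeries_correct q t (CV_radius_inside q t H)).
  unfold is_pseries. apply is_series_ext. intro k. rewrite pow_n_pow.
  unfold scal; simpl; unfold mult; simpl. ring.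
Qed.

Lemma is_series_extR (a b : nat -> R) (l : R) :
  (forall n, a n = b n) -> is_series a l -> is_series b l.
Proof. apply is_series_ext. Qed.

Lemma rlt_trans (r : R) (c : Rbar) t : Rabs t < r -> Rbar_le r c -> Rbar_lt (Rabs t) c.
Proof. intros H1 H2. destruct c; simpl in *; auto; lra. Qed.

Lemma ext_deriv (F G : R -> R) (x l1 l2 : R) :
  locally x (fun t => F t = G t) -> is_derive F x l1 -> is_derive G x l2 -> l1 = l2.
Proof.
  intros Hl H1 H2. apply (is_derive_ext_loc _ _ _ _ Hl) in H1.
  rewrite <- (is_derive_unique _ _ _ H1). now apply is_derive_unique.
Qed.

Lemma loc_ball (x r : R) : Rabs x < r -> locally x (fun t => Rabs t < r).
Proof.
  intro H. assert (Hp : 0 < r - Rabs x) by lra. exists (mkposreal _ Hp). intros t Ht.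
  unfold ball in Ht; simpl in Ht; unfold AbsRing_ball, abs, minus, plus, opp in Ht; simpl in Ht.
  pose proof (Rabs_triang_inv t x). unfold Rminus in *. simpl in *. lra.
Qed.

Lemma DP c x : Rbar_lt (Rabs x) (CV_radius c) -> Derive (fun t => PSeries c t) x = PSeries (PS_derive c) x.
Proof. apply Derive_PSeries. Qed.

Lemma moments (a h : nat -> R) (R0 : R) (p : nat -> R -> R)
  (HR0 : 1 < R0)
  (Ha_rad : Rbar_le (Finite R0) (CV_radius a))
  (Hh_rad : Rbar_le (Finite R0) (CV_radius h))
  (Hp_gen : forall x t, Rabs t < R0 ->
      is_series (fun k => p k x * t ^ k) (PSeries a t * exp (x * PSeries h t)))
  (HH'1 : is_derive (PSeries h) 1 1)
 (y : R) :
  let A1 := PSeries a 1 in let Ad := PSeries (PS_derive a) 1 in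
  let Add := PSeries (PS_derive (PS_derive a)) 1 in
  let Hdd := PSeries (PS_derive (PS_derive h)) 1 in
  let E := exp (y * PSeries h 1) in
  is_series (fun k => p k y) (A1 * E) /\
  is_series (fun k => INR k * p k y) (Ad * E + A1 * E * y) /\
  is_series (fun k => INR k * (INR k - 1) * p k y)
     (Add * E + 2 * Ad * E * y + A1 * E * (y * Hdd + y ^ 2)).
Proof.
  intros A1 Ad Add Hdd E.
  set (q := fun k => p k y).
  set (r := (1 + R0) / 2).
  assert (Hr : Rbar_le (Finite r) (CV_radius q)).
  { apply rad_ge. unfold r; lra. eexists. apply Hp_gen. rewrite Rabs_pos_eq; unfold r; lra. }
  assert (Hin : forall t, Rabs t < r -> Rbar_lt (Rabs t) (CV_radius q)).
  { intros t Ht. apply (rlt_trans r); auto. }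
  assert (HinA : forall t, Rabs t < r -> Rbar_lt (Rabs t) (CV_radius a)).
  { intros t Ht. apply (rlt_trans R0); [unfold r in Ht; lra | exact Ha_rad]. }
  assert (HinH : forall t, Rabs t < r -> Rbar_lt (Rabs t) (CV_radius h)).
  { intros t Ht. apply (rlt_trans R0); [unfold r in Ht; lra | exact Hh_rad]. }
  assert (H1r : Rabs 1 < r) by (rewrite Rabs_R1; unfold r; lra).
  assert (Hd1 : PSeries (PS_derive h) 1 = 1).
  { pose proof (is_derive_unique _ _ _ HH'1) as HH. rewrite Derive_PSeries in HH by auto. exact HH. }
  set (G0 := fun t => PSeries a t * exp (y * PSeries h t)).
  set (G1 := fun t => PSeries (PS_derive a) t * exp (y * PSeries h t)
       + PSeries a t * (y * PSeries (PS_derive h) t * exp (y * PSeries h t))).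
  assert (HG0 : forall t, Rabs t < r -> is_derive G0 t (G1 t)).
  { intros t Ht. unfold G0, G1. auto_derive.
    - repeat split; try apply ex_derive_PSeries; auto.
    - rewrite !Derive_PSeries; auto. ring. }
  assert (Heq0 : forall t, Rabs t < r -> PSeries q t = G0 t).
  { intros t Ht. assert (Ht' : Rabs t < R0) by (unfold r in Ht; lra).
    pose proof (is_series_unique _ _ (Hp_gen y t Ht')) as E0.
    unfold PSeries. unfold G0. rewrite <- E0. apply Series_ext. intro k.
    unfold q; simpl. ring. }
  assert (Heq1 : forall t, Rabs t < r -> PSeries (PS_derive q) t = G1 t).
  { intros t Ht. eapply ext_deriv. 2: apply is_derive_PSeries; auto. 2: apply HG0; auto.
    eapply filter_imp. 2: apply loc_ball; eauto. intros s Hs. now apply Heq0. }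
  set (G2 := PSeries (PS_derive (PS_derive a)) 1 * E +
             PSeries (PS_derive a) 1 * (y * PSeries (PS_derive h) 1 * E) +
             (PSeries (PS_derive a) 1 * (y * PSeries (PS_derive h) 1 * E) +
              PSeries a 1 * (y * PSeries (PS_derive (PS_derive h)) 1 * E +
                 y * PSeries (PS_derive h) 1 * (y * PSeries (PS_derive h) 1 * E)))).
  assert (HG1 : is_derive G1 1 G2).
  { unfold G1, G2, E. auto_derive.
    - repeat split; try apply ex_derive_PSeries; auto; rewrite ?CV_radius_derive; auto.
    - assert (Ha1 := HinA 1 H1r). assert (Hh1 := HinH 1 H1r).
      assert (Ha2 : Rbar_lt (Rabs 1) (CV_radius (PS_derive a))) by (rewrite CV_radius_derive; auto).
      assert (Hh2 : Rbar_lt (Rabs 1) (CV_radius (PS_derive h))) by (rewrite CV_radius_derive; auto).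
      rewrite (DP a 1 Ha1), (DP h 1 Hh1), (DP _ 1 Ha2), (DP _ 1 Hh2). ring. }
  assert (Heq2 : PSeries (PS_derive (PS_derive q)) 1 = G2).
  { eapply ext_deriv. 2: apply is_derive_PSeries; rewrite CV_radius_derive; auto.
    2: apply HG1.
    eapply filter_imp. 2: apply loc_ball; eauto. intros s Hs. now apply Heq1. }
  split; [|split].
  - eapply is_series_extR. 2: apply (Hp_gen y 1); rewrite Rabs_R1; lra.
    intro k. cbv beta. rewrite pow1. unfold q. ring.
  - pose proof (is_series_pser (PS_derive q) 1 ltac:(rewrite CV_radius_derive; auto)) as S1.
    rewrite Heq1 in S1 by auto. unfold G1 in S1. rewrite Hd1 in S1.
    apply is_series_decr_1.
    match goal with |- is_series _ ?l => replace l with (PSeries (PS_derive a) 1 * exp (y * PSeries h 1) + PSeries a 1 * (y * 1 * exp (y * PSeries h 1))) end.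
    2: { unfold plus, opp; simpl. unfold Ad, A1, E. ring. } eapply is_series_extR. 2: exact S1.
    intro k. cbv beta. unfold PS_derive, q. rewrite pow1. ring.
  - pose proof (is_series_pser (PS_derive (PS_derive q)) 1 ltac:(rewrite !CV_radius_derive; auto)) as S2.
    rewrite Heq2 in S2.
    apply is_series_decr_1. apply is_series_decr_1.
    match goal with |- is_series _ ?l => replace l with G2 end.
    2: { unfold plus, opp; simpl. unfold G2, Add, Ad, A1, Hdd, E. rewrite Hd1. ring. } eapply is_series_extR. 2: exact S2.
    intro k. cbv beta. unfold PS_derive, q. rewrite pow1. rewrite !S_INR. ring.
Qed.

Lemma isR_plus (a b : nat -> R) la lb : is_series a la -> is_series b lb ->
  is_series (fun k => a k + b k) (la + lb).
Proof. intros A B. exact (is_series_plus _ _ _ _ A B). Qed.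
Lemma isR_scal (a : nat -> R) c l : is_series a l -> is_series (fun k => c * a k) (c * l).
Proof. intros A. exact (is_series_scal c _ _ A). Qed.
Lemma isR_ext (a b : nat -> R) (l : R) :
  (forall n, a n = b n) -> is_series a l -> is_series b l.
Proof. apply is_series_ext. Qed.

Lemma ex_leR (a b : nat -> R) : (forall n, Rabs (a n) <= b n) -> ex_series b -> ex_series a.
Proof. intros H1 H2. exact (@ex_series_le R_AbsRing R_CompleteNormedModule a b H1 H2). Qed.

Lemma key (q t : nat -> R) x (g : R -> R) (Mg P Q m0 m1 m2 : R) :
 (forall k, 0 <= q k) -> (forall k, 0 <= t k) ->
 is_series q m0 -> is_series (fun k => q k * t k) m1 -> is_series (fun k => q k * t k ^ 2) m2 ->
 (forall s, 0 <= s -> Rabs (g s) <= Mg * rho s) ->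
 (forall s, 0 <= s -> Rabs (g s - g x) <= P + Q * (s - x) ^ 2) ->
 ex_series (fun k => q k * g (t k)) /\
 Rabs (Series (fun k => q k * g (t k)) - m0 * g x) <= P * m0 + Q * (m2 - 2 * x * m1 + x ^ 2 * m0).
Proof.
  intros Hq Ht S0 S1 S2 Hg Hmod.
  assert (Sr : is_series (fun k => Mg * (q k + q k * t k ^ 2)) (Mg * (m0 + m2))).
  { apply isR_scal, isR_plus; auto. }
  assert (Ex : ex_series (fun k => q k * g (t k))).
  { apply (ex_leR _ (fun k => Mg * (q k + q k * t k ^ 2))). 2: eexists; exact Sr.
    intro k.
    rewrite Rabs_mult, (Rabs_pos_eq (q k)) by auto.
    replace (Mg * (q k + q k * t k ^ 2)) with (q k * (Mg * rho (t k))) by (unfold rho; ring).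
    apply Rmult_le_compat_l; auto. }
  split; auto.
  set (u := fun k => q k * (g (t k) - g x)).
  set (d := fun k => q k * (P + Q * (t k - x) ^ 2)).
  assert (Sd : is_series d (P * m0 + Q * (m2 - 2 * x * m1 + x ^ 2 * m0))).
  { replace (P * m0 + Q * (m2 - 2 * x * m1 + x ^ 2 * m0)) with (P * m0 + Q * ((m2 + (-2 * x) * m1) + x ^ 2 * m0)) by ring.
    eapply isR_ext. 2: apply isR_plus; [apply isR_scal; exact S0 | apply isR_scal; apply isR_plus;
      [apply isR_plus; [exact S2 | apply isR_scal; exact S1] | apply isR_scal; exact S0]].
    intro k. unfold d. ring. }
  assert (Hud : forall k, Rabs (u k) <= d k).
  { intro k. unfold u, d. rewrite Rabs_mult, (Rabs_pos_eq (q k)) by auto.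
    apply Rmult_le_compat_l; auto. }
  assert (Eu : ex_series (fun k => Rabs (u k))).
  { apply (ex_leR _ d). 2: eexists; exact Sd.
    intro k. rewrite Rabs_Rabsolu. auto. }
  assert (Hs : Series u = Series (fun k => q k * g (t k)) - m0 * g x).
  { unfold u. rewrite <- (is_series_unique _ _ S0).
    rewrite <- Series_scal_r, <- Series_minus; auto. apply Series_ext. intro; ring.
    exists (g x * m0). eapply isR_ext. 2: apply isR_scal; exact S0. intro; simpl; ring. }
  rewrite <- Hs. eapply Rle_trans. apply Series_Rabs; auto.
  rewrite <- (is_series_unique _ _ Sd). apply Series_le. 2: eexists; exact Sd.
  intro k. split. apply Rabs_pos. auto.
Qed.

Lemma rho_ge1 x : 1 <= rho x.
Proof. unfold rho. simpl. pose proof (Rle_0_sqr x). unfold Rsqr in *. nra. Qed.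

Lemma rho_tri s x : rho s <= 2 * rho x + 2 * (s - x) ^ 2.
Proof. unfold rho. simpl. pose proof (Rle_0_sqr (s - 2*x)). unfold Rsqr in *. nra. Qed.

Lemma modulus (g gtl : R -> R) (Mg : R) :
 (forall s, 0 <= s -> gtl s = g s) ->
 (forall s, 0 <= s -> continuity_pt gtl s) ->
 (forall s, 0 <= s -> Rabs (g s) <= Mg * rho s) ->
 (forall e, 0 < e -> exists R, forall s, R < s -> Rabs (g s) <= e * rho s) ->
 forall e, 0 < e -> exists Q, forall s x, 0 <= s -> 0 <= x ->
   Rabs (g s - g x) <= e * rho x + Q * (s - x) ^ 2.
Proof.
  intros Hgt Hc Hg Hdec e He.
  set (e' := e / 3). assert (He' : 0 < e') by (unfold e'; lra).
  destruct (Hdec e' He') as [R1 HR1].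
  set (RR := Rmax R1 1 + 1).
  assert (HR1' : R1 < RR) by (unfold RR; pose proof (Rmax_l R1 1); lra).
  assert (HR : 2 <= RR) by (unfold RR; pose proof (Rmax_r R1 1); lra).
  assert (UC : uniform_continuity gtl (fun c => 0 <= c <= 2 * RR)).
  { apply Heine. apply compact_P3. intros c Hc'. apply Hc. lra. }
  destruct (UC (mkposreal e' He')) as [[delta Hdelta] Hdl]. simpl in Hdl.
  set (d := Rmin delta 1).
  assert (Hd0 : 0 < d) by (unfold d; apply Rmin_glb_lt; lra).
  assert (Hd1 : d <= 1) by (unfold d; apply Rmin_r).
  assert (Hdd : d <= delta) by (unfold d; apply Rmin_l).
  assert (HMg : 0 <= Mg).
  { pose proof (Hg 0 (Rle_refl 0)). unfold rho in H. pose proof (Rabs_pos (g 0)). simpl in H. lra. }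
  set (r2 := rho (2 * RR)).
  exists (2 * e' + Mg * (3 * r2 / d ^ 2 + 17)).
  intros s x Hs Hx.
  pose proof (rho_ge1 x) as Hrx. pose proof (rho_tri s x) as Htri.
  set (Zq := (s - x) ^ 2).
  assert (HZ : 0 <= Zq) by (unfold Zq; apply pow2_ge_0).
  assert (Hd2 : 0 < d ^ 2) by (apply pow_lt; lra).
  assert (HQ0 : 0 <= Mg * (3 * r2 / d ^ 2 + 17)).
  { apply Rmult_le_pos; auto. assert (0 <= r2) by (pose proof (rho_ge1 (2*RR)); unfold r2; lra).
    assert (0 <= 3 * r2 / d ^ 2) by (apply Rdiv_le_0_compat; lra). lra. }
  assert (Htr : Rabs (g s - g x) <= Rabs (g s) + Rabs (g x)).
  { unfold Rminus. eapply Rle_trans. apply Rabs_triang. rewrite Rabs_Ropp. lra. }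
  assert (HQZ : 0 <= Mg * (3 * r2 / d ^ 2 + 17) * Zq) by (apply Rmult_le_pos; auto).
  destruct (Classical_Prop.classic (RR <= s /\ RR <= x)) as [[Hsr Hxr] | nA0].
  {
    pose proof (HR1 s ltac:(lra)). pose proof (HR1 x ltac:(lra)).
    assert (A1 : e' * rho s <= 2*(e'*rho x) + 2*(e'*Zq)).
    { replace (2*(e'*rho x) + 2*(e'*Zq)) with (e'*(2*rho x + 2*Zq)) by ring.
      apply Rmult_le_compat_l. lra. unfold Zq; lra. }
    assert (A2 : e * rho x = 3*(e'*rho x)) by (unfold e'; field).
    rewrite Rmult_plus_distr_r, A2. assert (A3 : 2 * e' * Zq = 2 * (e' * Zq)) by ring. lra. }
  assert (nA : s < RR \/ x < RR).
  { destruct (Rle_lt_dec RR s); destruct (Rle_lt_dec RR x); auto. exfalso; auto. }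
  assert (Hb1 : Rabs (g s - g x) <= Mg * rho s + Mg * rho x) by
         (pose proof (Hg s Hs); pose proof (Hg x Hx); lra).
  assert (Hb2 : Mg * rho s <= 2 * (Mg * rho x) + 2 * (Mg * Zq)) by
         (replace (2 * (Mg * rho x) + 2 * (Mg * Zq)) with (Mg * (2 * rho x + 2 * Zq)) by ring;
          apply Rmult_le_compat_l; [lra | unfold Zq; lra]).
  destruct (Classical_Prop.classic (s <= 2 * RR /\ x <= 2 * RR /\ Rabs (s - x) < delta)) as [B | nB].
  { assert (Rabs (g s - g x) < e') by (rewrite <- !Hgt by lra; apply Hdl; lra).
    assert (e' <= e * rho x) by (unfold e'; nra).
    assert (0 <= e' * Zq) by (apply Rmult_le_pos; lra).
    rewrite Rmult_plus_distr_r. lra. }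
  assert (Hdz : d <= Rabs (s - x)).
  { destruct (Rle_lt_dec s (2 * RR)); destruct (Rle_lt_dec x (2 * RR)).
    - destruct (Rlt_le_dec (Rabs (s - x)) delta). exfalso; apply nB; auto. lra.
    - pose proof (Rle_abs (-(s - x))). rewrite Rabs_Ropp in H. lra.
    - pose proof (Rle_abs (s - x)). lra.
    - lra. }
  assert (Hdz2 : d ^ 2 <= Zq).
  { unfold Zq. rewrite <- (pow2_abs (s - x)). apply pow_incr. split; lra. }
  assert (HZd : 1 <= Zq / d ^ 2).
  { assert (Zq / d ^ 2 * d ^ 2 = Zq) by (field; lra). nra. }
  assert (Hclaim : Mg * rho x <= Mg * (r2 / d ^ 2) * Zq + 5 * (Mg * Zq)).
  { assert (0 <= Mg * Zq) by (apply Rmult_le_pos; lra).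
    destruct (Rle_lt_dec x (2 * RR)).
    - assert (rho x <= r2) by (unfold r2, rho; simpl; nra).
      assert (r2 <= r2 / d ^ 2 * Zq).
      { replace (r2 / d ^ 2 * Zq) with (r2 * (Zq / d ^ 2)) by (field; lra).
        assert (1 <= r2) by (apply rho_ge1). nra. }
      assert (Mg * rho x <= Mg * (r2 / d ^ 2 * Zq)) by (apply Rmult_le_compat_l; lra).
      rewrite Rmult_assoc. lra.
    - assert (s < RR) by lra.
      assert (rho x <= 5 * Zq) by (unfold rho, Zq; simpl; nra).
      assert (0 <= Mg * (r2 / d ^ 2) * Zq).
      { apply Rmult_le_pos; auto. apply Rmult_le_pos; auto. apply Rdiv_le_0_compat; try lra.
        pose proof (rho_ge1 (2 * RR)). unfold r2. lra. }
      assert (Mg * rho x <= Mg * (5 * Zq)) by (apply Rmult_le_compat_l; lra). lra. }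
  assert (Hexp : (2 * e' + Mg * (3 * r2 / d ^ 2 + 17)) * Zq =
          2 * (e' * Zq) + 3 * (Mg * (r2 / d ^ 2) * Zq) + 17 * (Mg * Zq)) by (field; lra).
  rewrite Hexp.
  assert (0 <= e' * Zq) by (apply Rmult_le_pos; lra).
  assert (0 <= e * rho x) by (apply Rmult_le_pos; lra).
  lra.
Qed.

Lemma cont_abs (f : R -> R) x : 0 <= x ->
  filterlim f (within (fun y => 0 <= y) (locally x)) (locally (f x)) ->
  continuity_pt (fun s => f (Rabs s)) x.
Proof.
  intros Hx Hc. apply continuity_pt_filterlim.
  rewrite (Rabs_pos_eq x Hx).
  eapply filterlim_comp; [|exact Hc].
  intros P [eps HP]. exists eps. intros y Hy. apply HP.
  - unfold ball in *; simpl in *; unfold AbsRing_ball, abs, minus, plus, opp in *; simpl in *.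
    pose proof (Rabs_triang_inv2 y x). rewrite (Rabs_pos_eq x Hx) in H.
    unfold Rminus in H. lra.
  - apply Rabs_pos.
Qed.

Lemma series_nonneg (a : nat -> R) (l : R) : (forall k, 0 <= a k) -> is_series a l -> 0 <= l.
Proof.
  intros Ha Hs. rewrite <- (is_series_unique _ _ Hs).
  assert (Z0 : is_series (fun _ : nat => 0) 0).
  { assert (Z1 : is_series (fun _ : nat => 0) (0 * l)). 2: rewrite Rmult_0_l in Z1; exact Z1. eapply isR_ext. 2: apply (isR_scal _ 0 _ Hs). intro; simpl; ring. }
  replace 0 with (Series (fun _ : nat => 0)) at 1.
  apply Series_le. intro; split; auto; lra. eexists; exact Hs.
  apply (is_series_unique _ _ Z0).
Qed.

Lemma cbound c x u v : 0 < c -> c <= 1 -> 0 <= x ->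
  Rabs (c ^ 2 * u + c * x * v) <= c * rho x * (Rabs u + Rabs v).
Proof.
  intros Hc Hc1 Hx.
  assert (Hr : 1 <= rho x) by apply rho_ge1.
  assert (Hxr : x <= rho x) by (unfold rho; simpl; nra).
  eapply Rle_trans. apply Rabs_triang.
  rewrite !Rabs_mult, (Rabs_pos_eq c), (Rabs_pos_eq x), Rabs_pos_eq by (try apply pow_le; lra).
  assert (c ^ 2 <= c * rho x) by (simpl; nra).
  assert (c * x <= c * rho x) by nra.
  pose proof (Rabs_pos u). pose proof (Rabs_pos v).
  nra.
Qed.

Theorem theorem3p4
  (a h : nat -> R) (R0 : R) (p : nat -> R -> R) (b : nat -> R)
  (HR0 : 1 < R0)
  (Ha_rad : Rbar_le (Finite R0) (CV_radius a))
  (Hh_rad : Rbar_le (Finite R0) (CV_radius h))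
  (Ha0 : a 0%nat <> 0)
  (Hh0 : h 0%nat = 0)
  (Hh1 : h 1%nat <> 0)
  (Hp_gen : forall x t, Rabs t < R0 ->
      is_series (fun k => p k x * t ^ k) (PSeries a t * exp (x * PSeries h t)))
  (Hp_nonneg : forall k x, 0 <= x -> 0 <= p k x)
  (HA1 : PSeries a 1 <> 0)
  (HH'1 : is_derive (PSeries h) 1 1)
  (Hb_pos : forall n, 0 < b n)
  (Hb_incr : forall n, b n <= b (S n))
  (Hb_inf : is_lim_seq b p_infty)
  (Hb_n : is_lim_seq (fun n => b n / INR n) 0)
  (f : R -> R) (Hf : C_rho_k f) :
  forall eps : R, 0 < eps ->
    exists N : nat, forall n : nat, (N <= n)%nat ->
      Rbar_le (rho_norm (fun x => T_star a h p b n f x - f x)) (Finite eps).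
Proof.
  intros eps Heps.
  destruct Hf as [[Hcont [Mf [HMf HBf]]] [l Hl]].
  assert (Hrho : forall s, 0 < rho s) by (intro s; pose proof (rho_ge1 s); lra).
  set (g := fun s => f s - l * rho s).
  assert (Hg : forall s, 0 <= s -> Rabs (g s) <= (Mf + Rabs l) * rho s).
  { intros s Hs. unfold g. unfold Rminus. eapply Rle_trans. apply Rabs_triang.
    rewrite Rabs_Ropp, Rabs_mult, (Rabs_pos_eq (rho s)) by (left; auto).
    pose proof (HBf s Hs). rewrite Rmult_plus_distr_r. lra. }
  assert (Hdec : forall e, 0 < e -> exists R, forall s, R < s -> Rabs (g s) <= e * rho s).
  { intros e He. apply is_lim_spec in Hl. destruct (Hl (mkposreal e He)) as [M HM].
    exists M. intros s Hs. specialize (HM s Hs). simpl in HM.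
    unfold g. replace (f s - l * rho s) with ((f s / rho s - l) * rho s)
      by (field; apply Rgt_not_eq, Hrho).
    rewrite Rabs_mult, (Rabs_pos_eq (rho s)) by (left; auto).
    apply Rmult_le_compat_r; [left; auto | lra]. }
  set (gtl := fun s => f (Rabs s) - l * rho s).
  assert (Hgt : forall s, 0 <= s -> gtl s = g s)
    by (intros s Hs; unfold gtl, g; rewrite Rabs_pos_eq; auto).
  assert (Hct : forall s, 0 <= s -> continuity_pt gtl s).
  { intros s Hs. apply (continuity_pt_minus (fun s => f (Rabs s)) (fun s => l * rho s)).
    apply cont_abs; auto.
    apply continuity_pt_filterlim. apply (ex_derive_continuous (fun s => l * rho s)).
    unfold rho. auto_derive. auto. }
  destruct (modulus g gtl (Mf + Rabs l) Hgt Hct Hg Hdec (eps / 2) ltac:(lra)) as [Q HQ].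
  set (A1 := PSeries a 1). set (Ad := PSeries (PS_derive a) 1).
  set (Add := PSeries (PS_derive (PS_derive a)) 1).
  set (Hdd := PSeries (PS_derive (PS_derive h)) 1). set (H1 := PSeries h 1).
  assert (HA1p : 0 < A1).
  { destruct (moments a h R0 p HR0 Ha_rad Hh_rad Hp_gen HH'1 0) as [S00 _].
    apply series_nonneg in S00. 2: intro; apply Hp_nonneg; lra.
    rewrite Rmult_0_l, exp_0, Rmult_1_r in S00. fold A1 in S00. destruct S00; auto.
    exfalso; apply HA1; auto. }
  set (Z1 := Rabs (Add / A1 + Ad / A1) + Rabs (Hdd + 1)).
  set (Z2 := Rabs (Add / A1 + Ad / A1) + Rabs (2 * (Ad / A1) + Hdd + 1)).
  set (Kc := Rabs Q * Z1 + Rabs l * Z2).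
  assert (HKc : 0 <= Kc).
  { unfold Kc, Z1, Z2. pose proof (Rabs_pos Q). pose proof (Rabs_pos l).
    pose proof (Rabs_pos (Add / A1 + Ad / A1)). pose proof (Rabs_pos (Hdd + 1)).
    pose proof (Rabs_pos (2 * (Ad / A1) + Hdd + 1)). nra. }
  set (d0 := Rmin 1 (eps / 2 / (Kc + 1))).
  assert (Hd0 : 0 < d0).
  { unfold d0. apply Rmin_glb_lt. lra. apply Rdiv_lt_0_compat; lra. }
  apply is_lim_seq_spec in Hb_n. destruct (Hb_n (mkposreal d0 Hd0)) as [N0 HN0].
  exists (max N0 1). intros n Hn.
  specialize (HN0 n ltac:(lia)). simpl in HN0. rewrite Rminus_0_r in HN0.
  assert (HN' : 0 < INR n) by (apply lt_0_INR; lia).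
  pose proof (Hb_pos n) as HB.
  set (c := b n / INR n) in HN0.
  assert (Hc0 : 0 < c) by (unfold c; apply Rdiv_lt_0_compat; auto).
  rewrite Rabs_pos_eq in HN0 by lra.
  assert (Hd01 : d0 <= 1) by (apply Rmin_l).
  assert (Hd02 : d0 <= eps / 2 / (Kc + 1)) by (apply Rmin_r).
  assert (Hc1 : c <= 1) by lra.
  assert (HcK : c * Kc <= eps / 2).
  {
    assert (c * (Kc + 1) <= eps / 2).
    { apply (Rmult_le_reg_r (/ (Kc + 1))). apply Rinv_0_lt_compat; lra.
      rewrite Rmult_assoc, Rinv_r by lra. unfold Rdiv in *. lra. }
    nra. }
  unfold rho_norm. destruct (Lub_Rbar_correct (fun y => exists x, 0 <= x /\ y = Rabs (T_star a h p b n f x - f x) / rho x)) as [_ Hlub].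
  apply Hlub. intros z [x [Hx ->]]. simpl.
  apply Rle_div_l. apply Hrho.
  unfold T_star.
  set (y := INR n / b n * x).
  assert (Hy : 0 <= y) by (unfold y; apply Rmult_le_pos; [apply Rdiv_le_0_compat|]; lra).
  destruct (moments a h R0 p HR0 Ha_rad Hh_rad Hp_gen HH'1 y) as [S0 [S1 S2]].
  fold A1 Ad Add Hdd H1 in S0, S1, S2.
  set (E := exp (y * H1)) in S0, S1, S2.
  assert (HE : 0 < E) by apply exp_pos.
  set (q := fun k => p k y).
  set (t := fun k => INR k / INR n * b n).
  set (m0 := A1 * E).
  set (m1 := c * (Ad * E + A1 * E * y)).
  set (m2 := c ^ 2 * ((Add * E + 2 * Ad * E * y + A1 * E * (y * Hdd + y ^ 2)) + (Ad * E + A1 * E * y))).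
  assert (T1 : is_series (fun k => q k * t k) m1).
  { eapply isR_ext. 2: apply (isR_scal _ c _ S1). intro k. unfold q, t, c. field. lra. }
  assert (T2 : is_series (fun k => q k * t k ^ 2) m2).
  { eapply isR_ext. 2: apply (isR_scal _ (c ^ 2) _ (isR_plus _ _ _ _ S2 S1)).
    intro k. unfold q, t, c. field. lra. }
  assert (Hq : forall k, 0 <= q k) by (intro; apply Hp_nonneg; auto).
  assert (Ht : forall k, 0 <= t k).
  { intro k. unfold t. apply Rmult_le_pos; [apply Rdiv_le_0_compat; [apply pos_INR|]|]; lra. }
  destruct (key q t x g (Mf + Rabs l) (eps / 2 * rho x) Q m0 m1 m2 Hq Ht S0 T1 T2 Hg
    (fun s Hs => HQ s x Hs Hx)) as [Exg Hkey].
  assert (Hser : Series (fun k => p k y * f (INR k / INR n * b n)) =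
                 Series (fun k => q k * g (t k)) + l * (m0 + m2)).
  { replace (m0 + m2) with (Series (fun k => q k + q k * t k ^ 2))
      by (apply (is_series_unique _ _ (isR_plus _ _ _ _ S0 T2))).
    rewrite <- Series_scal_l, <- Series_plus.
    - apply Series_ext. intro k. unfold g, q, t, rho. ring.
    - exact Exg.
    - eexists. apply isR_scal. apply (isR_plus _ _ _ _ S0 T2). }
  replace (INR n / b n * x) with y by reflexivity.
  rewrite Hser.
  assert (HK : exp (- (INR n / b n) * x * H1) / A1 = / (A1 * E)).
  { replace (- (INR n / b n) * x * H1) with (- (y * H1)) by (unfold y; ring).
    rewrite exp_Ropp. fold E. field. split; lra. }
  fold H1 A1. rewrite HK.
  set (Sg := Series (fun k => q k * g (t k))) in *.
  assert (Hfx : f x = g x + l * rho x) by (unfold g; ring).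
  rewrite Hfx.
  assert (Hid : / (A1 * E) * (Sg + l * (m0 + m2)) - (g x + l * rho x) =
     / (A1 * E) * (Sg - m0 * g x) + l * (/ (A1 * E) * m2 - x ^ 2)).
  { unfold m0, rho. field. split; lra. }
  rewrite Hid.
  assert (HD1 : / (A1 * E) * (m2 - 2 * x * m1 + x ^ 2 * m0) =
     c ^ 2 * (Add / A1 + Ad / A1) + c * x * (Hdd + 1)).
  { unfold m0, m1, m2, c, y in *. field. repeat split; lra. }
  assert (HD2 : / (A1 * E) * m2 - x ^ 2 =
     c ^ 2 * (Add / A1 + Ad / A1) + c * x * (2 * (Ad / A1) + Hdd + 1)).
  { unfold m0, m1, m2, c, y in *. field. repeat split; lra. }
  pose proof (cbound c x (Add / A1 + Ad / A1) (Hdd + 1) Hc0 Hc1 Hx) as B1.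
  pose proof (cbound c x (Add / A1 + Ad / A1) (2 * (Ad / A1) + Hdd + 1) Hc0 Hc1 Hx) as B2.
  rewrite <- HD1 in B1. rewrite <- HD2 in B2. fold Z1 in B1. fold Z2 in B2.
  assert (HiK : 0 < / (A1 * E)) by (apply Rinv_0_lt_compat; nra).
  assert (Hfirst : Rabs (/ (A1 * E) * (Sg - m0 * g x)) <=
       eps / 2 * rho x + Q * (/ (A1 * E) * (m2 - 2 * x * m1 + x ^ 2 * m0))).
  { rewrite Rabs_mult, (Rabs_pos_eq (/ (A1 * E))) by lra.
    eapply Rle_trans. apply Rmult_le_compat_l. lra. exact Hkey.
    right. unfold m0. field. split; lra. }
  set (D1 := / (A1 * E) * (m2 - 2 * x * m1 + x ^ 2 * m0)) in *.
  set (D2 := / (A1 * E) * m2 - x ^ 2) in *.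
  assert (HQD : Q * D1 <= Rabs Q * (c * rho x * Z1)).
  { eapply Rle_trans. apply Rle_abs. rewrite Rabs_mult.
    apply Rmult_le_compat_l. apply Rabs_pos. exact B1. }
  assert (HlD : Rabs (l * D2) <= Rabs l * (c * rho x * Z2)).
  { rewrite Rabs_mult. apply Rmult_le_compat_l. apply Rabs_pos. exact B2. }
  eapply Rle_trans. apply Rabs_triang.
  assert (Hfin : Rabs Q * (c * rho x * Z1) + Rabs l * (c * rho x * Z2) = (c * Kc) * rho x)
    by (unfold Kc; ring).
  assert ((c * Kc) * rho x <= eps / 2 * rho x) by (apply Rmult_le_compat_r; [left; auto | lra]).
  lra.
Qed.
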